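(* Let $\Omega=\{0,1\}^{\mathbb{N}}$ with canonical process $X=(X_t)_{t\in\mathbb{N}}$, natural filtration $\mathcal{F}_t=\sigma(X_s,s\le t)$ ($\mathcal{F}_0$ trivial), $\mathcal{F}=\sigma(\bigcup_t\mathcal{F}_t)$. For $n\in\mathbb{N}_0$ let $\mathbb{P}_n$ be the probability measure assigning probability $1/2$ to the all-zeros sequence $0^{\mathbb{N}}$ and probability $1/2$ to the sequence $0^n\,1\,0^{\mathbb{N}}$ (exactly one $1$, at position $n+1$). Let $\mathcal{P}=\{\mathbb{P}_n\}_{n\in\mathbb{N}_0}$ and $A=\{0^{\mathbb{N}}\}$. Then $\nu^*(A)=1/2$, $\mu^*(A)=1$, and $\mu^*(A^c)=1/2$.
   Context: Stopping times are with respect to the filtration above (values in $\mathbb{N}_0\cup\{\infty\}$), $\mathcal{T}$ is the set of all stopping times, and for $B\subseteq\Omega$: $\mu^*(B) = \inf_{\tau\in\mathcal{T}:\, B\subseteq\{\tau<\infty\}} \sup_{\mathbb{P}\in\mathcal{P}} \mathbb{P}(\tau<\infty)$ (the inverse-capital measure), and $\nu^*(B) = \sup_{\mathbb{P}\in\mathcal{P}}\mathbb{P}(B)$ for measurable $B$. *)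

(* Defs.v *)
From HB Require Import structures.
From mathcomp Require Import all_boot all_order all_algebra.
From mathcomp Require Import classical_sets boolp functions reals ereal measure.
Set Implicit Arguments. Unset Strict Implicit. Unset Printing Implicit Defensive.
Import Order.TTheory GRing.Theory Num.Theory.
Local Open Scope classical_set_scope.
Local Open Scope ring_scope.

(* Omega = {0,1}^N with N = {1,2,...}; a path w : nat -> bool is read as
   X_{k+1}(w) = w k  (true = 1, false = 0). *)
Definition Omega := nat -> bool.

Definition X (t : nat) (w : Omega) : bool := w t.-1.

Definition F (t : nat) : set (set Omega) :=
  <<s [set [set w : Omega | X sb.1 w = sb.2] | sb in
        [set sb : nat * bool | (1 <= sb.1 <= t)%N] ] >>.

(* stopping times with values in N_0 u {oo}; None encodes oo *)
Definition le_opt (o : option nat) (t : nat) : bool :=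
  if o is Some s then (s <= t)%N else false.

Definition stopping_time (tau : Omega -> option nat) : Prop :=
  forall t : nat, F t [set w | le_opt (tau w) t].

Definition finite_at (tau : Omega -> option nat) : set Omega :=
  [set w | tau w != None].

(* the all-zeros path and the path 0^n 1 0^N (single 1 at position n+1) *)
Definition zeros : Omega := fun _ => false.
Definition spike (n : nat) : Omega := fun k => k == n.

Definition Pn {R : realType} (n : nat) (B : set Omega) : \bar R :=
  (2^-1 * (zeros \in B)%:R + 2^-1 * (spike n \in B)%:R)%:E.

Definition nu_star {R : realType} (B : set Omega) : \bar R :=
  ereal_sup [set @Pn R n B | n in [set: nat]].

Definition mu_star {R : realType} (B : set Omega) : \bar R :=
  ereal_inf [set ereal_sup [set @Pn R n (finite_at tau) | n in [set: nat]]
            | tau in [set tau | stopping_time tau /\ B `<=` finite_at tau]].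

Definition A : set Omega := [set zeros].

(* Main.v *)
Require Import Defs.
From HB Require Import structures.
From mathcomp Require Import all_boot all_order all_algebra.
From mathcomp Require Import classical_sets boolp functions reals ereal measure.
Local Open Scope classical_set_scope.
Local Open Scope ring_scope.
Local Open Scope ereal_scope.

From mathcomp Require Import lra.
Import Order.TTheory GRing.Theory Num.Theory.

Lemma Fdet t S : F t S -> forall w w', (forall k, (k < t)%N -> w k = w' k) ->
  S w -> S w'.
Proof.
move=> FS.
pose C := [set S : set Omega | forall w w', (forall k, (k < t)%N -> w k = w' k) ->
  (S w <-> S w')].
suff : C S by move=> CS w w' ag; move/(CS w w' ag).
apply: (smallest_sub (X := C)) FS.
- split.
  + by move=> w w' _; split.
  + move=> B CB w w' ag /=; split => -[_ nB]; split => //; move=> hB; apply: nB.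
      by apply/(CB _ _ ag).
    by apply/(CB _ _ ag).
  + move=> B CB w w' ag; split => -[n _ hB]; exists n => //; first by apply/(CB n _ _ ag).
    by apply/(CB n _ _ ag).
- move=> B [[s b] /= /andP[s1 st] <-] w w' ag /=.
  rewrite /X ag //; case: s s1 st => // s _ st; exact: st.
Qed.

Lemma FT t : F t setT.
Proof.
have -> : (setT : set Omega) = setT `\` set0 by rewrite setD0.
apply: sigma_algebraCD; exact: sigma_algebra0.
Qed.

Definition tau1 (w : Omega) : option nat :=
  match pselect (exists k, w k) with
  | left h => Some (ex_minn h).+1
  | right _ => None
  end.

Lemma tau1_st : stopping_time tau1.
Proof.
move=> t.
have -> : [set w | le_opt (tau1 w) t] =
  \bigcup_k (if (k < t)%N then [set w : Omega | X k.+1 w = true] else set0).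
  apply/seteqP; split => w /=.
    rewrite /tau1; case: pselect => // h.
    case: ex_minnP => m wm _ /= mt.
    by exists m => //; rewrite mt.
  move=> [k _]; case: ifP => // kt /= wk.
  rewrite /tau1; case: pselect => [h|]; last by case; exists k.
  case: ex_minnP => m wm mm /=.
  exact: leq_ltn_trans (mm _ wk) kt.
apply: sigma_algebra_bigcup => k; case: ifP => kt.
  apply: sub_sigma_algebra; exists (k.+1, true) => //=.
exact: sigma_algebra0.
Qed.

Lemma Pn_le1 {R : realType} n B : @Pn R n B <= 1.
Proof.
rewrite /Pn lee_fin.
case: (zeros \in B); case: (spike n \in B) => /=; lra.
Qed.

Lemma spike_nz n : spike n <> zeros.
Proof. by move=> /(congr1 (fun f => f n)); rewrite /spike eqxx. Qed.

Theorem mainTheorem9 (R : realType) :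
  [/\ @nu_star R A = (2^-1)%:E,
      @mu_star R A = 1 &
      @mu_star R (~` A) = (2^-1)%:E].
Proof.
split.
- rewrite /nu_star.
  have -> : [set @Pn R n A | n in [set: nat]] = [set (2^-1)%:E].
    apply/seteqP; split => x /=.
      move=> [n _ <-]; rewrite /Pn (mem_set (erefl zeros : A zeros)).
      by rewrite memNset /A /= ?mulr1 ?mulr0 ?addr0 //; exact: spike_nz.
    move=> ->; exists 0%N => //; rewrite /Pn (mem_set (erefl zeros : A zeros)).
    by rewrite memNset /A /= ?mulr1 ?mulr0 ?addr0 //; exact: spike_nz.
  exact: ereal_sup1.
- rewrite /mu_star.
  have -> : [set ereal_sup [set @Pn R n (finite_at tau) | n in [set: nat]]
            | tau in [set tau | stopping_time tau /\ A `<=` finite_at tau]] = [set 1].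
    apply/seteqP; split => x /=.
    - move=> [tau [st sub] <-]; apply/le_anti/andP; split.
        by apply: ge_ereal_sup => _ [n _ <-]; exact: Pn_le1.
      have : finite_at tau zeros := sub zeros erefl.
      rewrite /finite_at /=; case E: (tau zeros) => [s|] // _.
      have hs : [set w | le_opt (tau w) s] (spike s).
        apply: (@Fdet _ _ (st s) zeros).
          by move=> k ks; rewrite /spike /zeros ltn_eqF.
        by rewrite /= E /=.
      apply: le_ereal_sup_tmp; exists (@Pn R s (finite_at tau)); first by exists s.
      rewrite /Pn !mem_set /finite_at /= ?E //; last by move: hs => /=; case: (tau (spike s)).
      rewrite lee_fin; lra.
    - move=> ->; exists (fun _ => Some 0%N).
        split; last by move=> w _.
        move=> t; have -> : [set w : Omega | le_opt (Some 0%N) t] = setT.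
          by apply/seteqP; split.
        exact: FT.
      apply/le_anti/andP; split.
        by apply: ge_ereal_sup => _ [n _ <-]; exact: Pn_le1.
      apply: le_ereal_sup_tmp; exists (@Pn R 0%N (finite_at (fun _ => Some 0%N))); first by exists 0%N.
      rewrite /Pn !mem_set /finite_at //= lee_fin; lra.
  exact: ereal_inf1.
- rewrite /mu_star; apply/le_anti/andP; split.
  + have hP : forall n, @Pn R n (finite_at tau1) = (2^-1)%:E.
      move=> n; rewrite /Pn memNset; last first.
        by rewrite /finite_at /tau1 /=; case: pselect => // -[k].
      rewrite mem_set; last first.
        rewrite /finite_at /tau1 /=; case: pselect => // -[]; exists n.
        by rewrite /spike eqxx.
      rewrite /=; congr (_%:E); rewrite mulr0 mulr1 add0r; done.
    have h1 : ereal_sup [set @Pn R n (finite_at tau1) | n in [set: nat]] = (2^-1)%:E.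
      rewrite -[RHS]ereal_sup1; congr ereal_sup; apply/seteqP; split => x /=.
        by move=> [n _ <-]; rewrite hP.
      by move=> ->; exists 0%N => //; rewrite hP.
    rewrite -h1; apply: ereal_inf_lbound; exists tau1 => //; split; first exact: tau1_st.
    move=> w nA; rewrite /finite_at /tau1 /=; case: pselect => // nk.
    exfalso; apply: nA; apply/funext => k; apply/negbTE/negP => wk; apply: nk.
    by exists k.
  + apply: le_ereal_inf_tmp => _ [tau [st sub] <-].
    apply: le_ereal_sup_tmp; exists (@Pn R 0%N (finite_at tau)); first by exists 0%N.
    rewrite /Pn (mem_set (sub (spike 0%N) (@spike_nz 0%N))) lee_fin.
    case: (zeros \in _) => /=; rewrite ?mulr1 ?mulr0 ?add0r; lra.
Qed.
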